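(* For every perfect square $n$ and every integer $1\le k\le n$, \[\left|\mathbb E_{x\in\mathcal S(\sqrt n)}[x_1x_2\cdots x_k]\right|\le k^{3k}\,n^{-k/2}.\]
   Context: $\mathcal S(\sqrt n)=\{x\in\{\pm1\}^n:\sum_{i=1}^n x_i=\sqrt n\}$, and $x$ is uniform on $\mathcal S(\sqrt n)$. *)

(* Defs.v *)
From mathcomp Require Import all_boot all_order all_algebra.
Set Implicit Arguments. Unset Strict Implicit. Unset Printing Implicit Defensive.
Import Order.TTheory GRing.Theory Num.Theory.
Local Open Scope ring_scope.

(* A point x in {±1}^n is encoded by b : {ffun 'I_n -> bool}, x_i = spin (b i). *)
Definition spin (b : bool) : int := if b then 1 else -1.

(* S(t) = { x in {±1}^n : sum_i x_i = t }, here with t = m (= sqrt n). *)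
Definition Sset (n m : nat) : {set {ffun 'I_n -> bool}} :=
  [set x : {ffun 'I_n -> bool} | \sum_(i < n) spin (x i) == (m%:Z)].

(* E_{x uniform in S}[x_1 ... x_k]  (coordinates 1..k = indices 0..k-1). *)
Definition moment (R : numFieldType) (n m k : nat) : R :=
  (\sum_(x in Sset n m) \prod_(i < n | (i < k)%N) (spin (x i))%:~R)
    / (#|Sset n m|)%:R.

(* Main.v *)
Require Import Defs.
From mathcomp Require Import all_boot all_order all_algebra all_fingroup zify ring lra.
Import Order.TTheory GRing.Theory Num.Theory.
Local Open Scope ring_scope.

Section S.
Variables (R : realFieldType) (n m : nat).

Definition sp (b : bool) : R := (spin b)%:~R.
Definition G (P : pred 'I_n) : R := \sum_(x in Sset n m) \prod_(i | P i) sp (x i).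

Lemma sp2 b : sp b * sp b = 1.
Proof. by case: b; rewrite /sp /spin /= ?mulrNN mulr1. Qed.

Lemma sumS (x : {ffun 'I_n -> bool}) : x \in Sset n m -> \sum_i sp (x i) = m%:R.
Proof.
rewrite inE => /eqP H.
have -> : \sum_i sp (x i) = (\sum_i spin (x i))%:~R by rewrite rmorph_sum.
by rewrite H.
Qed.

Lemma G_perm (P : pred 'I_n) (s : {perm 'I_n}) : G P = G (fun i => P (s i)).
Proof.
rewrite /G.
under eq_bigr => x _ do rewrite (reindex_inj (@perm_inj _ s)).
pose g (x : {ffun 'I_n -> bool}) := [ffun i => x (s i)].
pose g' (x : {ffun 'I_n -> bool}) := [ffun i => x ((s^-1)%g i)].
rewrite [RHS](reindex g); last first.
  exists g' => x _; apply/ffunP => i; rewrite !ffunE ?permKV ?permK //.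
apply: eq_big => [x|x _]; last by apply: eq_bigr => i _; rewrite /g ffunE.
rewrite !inE.
rewrite (reindex_inj (@perm_inj _ s)) /=.
by under [in RHS]eq_bigr => i _ do rewrite /g ffunE.
Qed.


Definition T (j : nat) : R := G (fun i => (i < j)%N).

Lemma cnt (j : nat) (c : R) : (j <= n)%N -> \sum_(i < n | (i < j)%N) c = c *+ j.
Proof.
move=> hj.
have := big_ord_widen_cond (idx := 0) (op := +%R) n predT (fun _ => c) hj.
rewrite /= sumr_const card_ord => <-.
by [].
Qed.

Lemma prod_mul (j : nat) (x : {ffun 'I_n -> bool}) (i : 'I_n) :
  (\prod_(k : 'I_n | (k < j)%N) sp (x k)) * sp (x i) =
  if (i < j)%N then \prod_(k : 'I_n | (k < j)%N && (k != i)) sp (x k)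
  else \prod_(k : 'I_n | (k < j)%N || (k == i)) sp (x k).
Proof.
case: ifP => hi.
  by rewrite (bigD1 i) //= mulrC mulrA sp2 mul1r.
rewrite [RHS](bigD1 i) /=; last by rewrite eqxx orbT.
rewrite mulrC; congr (_ * _).
apply: eq_bigl => k; case: (eqVneq k i) => [->|_]; by rewrite ?hi ?andbT ?orbF.
Qed.

Lemma Tlow j (i : 'I_n) : (i < j)%N -> (j <= n)%N ->
  G (fun k => (k < j)%N && (k != i)) = T j.-1.
Proof.
move=> hi hj.
have hj' : (j.-1 < n)%N by lia.
rewrite /T (G_perm _ (tperm i (Ordinal hj'))).
rewrite /G; apply: eq_bigr => x _; apply: eq_bigl => k /=.
case: tpermP => [->|->|/eqP hki /eqP hkj];
  [| |move: hki hkj; rewrite -!(inj_eq val_inj) /= => hki hkj];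
  rewrite -?(inj_eq val_inj) /=; apply/idP/idP; lia.
Qed.

Lemma Thigh j (i : 'I_n) : ~~ (i < j)%N -> (j < n)%N ->
  G (fun k => (k < j)%N || (k == i)) = T j.+1.
Proof.
move=> hi hj.
rewrite /T (G_perm _ (tperm i (Ordinal hj))).
rewrite /G; apply: eq_bigr => x _; apply: eq_bigl => k /=.
case: tpermP => [->|->|/eqP hki /eqP hkj];
  [| |move: hki hkj; rewrite -!(inj_eq val_inj) /= => hki hkj];
  rewrite -?(inj_eq val_inj) /=; apply/idP/idP; lia.
Qed.



Lemma cnt2 (j : nat) (c : R) : (j <= n)%N -> \sum_(i < n | ~~ (i < j)%N) c = c *+ (n - j).
Proof.
move=> hj.
have H : \sum_(i < n) c = \sum_(i < n | (i < j)%N) c + \sum_(i < n | ~~ (i < j)%N) c.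
  by rewrite (bigID (fun i : 'I_n => (i < j)%N)).
have H1 : \sum_(i < n) c = c *+ n by rewrite sumr_const card_ord.
rewrite cnt // H1 in H.
have -> : c *+ (n - j) = c *+ n - c *+ j by rewrite mulrnBr.
by rewrite H addrAC subrr add0r.
Qed.

Lemma Trec j : (j < n)%N -> m%:R * T j = j%:R * T j.-1 + (n - j)%:R * T j.+1.
Proof.
move=> hj.
have -> : m%:R * T j = \sum_(i < n) \sum_(x in Sset n m)
    (\prod_(k : 'I_n | (k < j)%N) sp (x k)) * sp (x i).
  rewrite /T /G mulr_sumr exchange_big /=; apply: eq_bigr => x hx.
  by rewrite -(@sumS x hx) mulrC mulr_sumr.
rewrite (bigID (fun i : 'I_n => (i < j)%N)) /=.
rewrite (eq_bigr (fun _ => T j.-1)); last first.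
  move=> i hi; rewrite -(@Tlow j i hi (ltnW hj)); apply: eq_bigr => x _; by rewrite prod_mul hi.
rewrite [X in _ + X](eq_bigr (fun _ => T j.+1)); last first.
  move=> i hi; rewrite -(@Thigh j i hi hj); apply: eq_bigr => x _; by rewrite prod_mul (negbTE hi).
rewrite cnt ?cnt2; try exact: ltnW.
by rewrite !mulr_natl.
Qed.


Lemma T0 : T 0 = #|Sset n m|%:R.
Proof.
rewrite /T /G.
under eq_bigr => x _ do rewrite big_pred0 //.
by rewrite sumr_const.
Qed.

Lemma Tle j : `|T j| <= #|Sset n m|%:R.
Proof.
rewrite /T /G; apply: le_trans (ler_norm_sum _ _ _) _.
rewrite -sumr_const; apply: ler_sum => x _.
rewrite normr_prod big1 // => i _.
by case: (x i); rewrite /sp /spin /= ?normrN normr1.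
Qed.

End S.

Lemma lexp (e : nat) [m1 m2 : nat] : (m1 <= m2)%N -> (m1 ^ e <= m2 ^ e)%N.
Proof. by case: e => [//|e] h; rewrite leq_exp2r. Qed.

Lemma dineq j : (2 * ((j.+1) ^ (3 * j.+1) + j.+1 * j ^ (3 * j)) <= j.+2 ^ (3 * j.+2))%N.
Proof.
have h1 : (j.+1 ^ (3 * j.+1) <= j.+2 ^ (3 * j.+1))%N by apply: lexp.
have h2 : (j ^ (3 * j) <= j.+2 ^ (3 * j.+1))%N.
  have h : (j <= j.+2)%N by lia.
  apply: (leq_trans (lexp (3 * j) h)).
  by apply: leq_pexp2l => //; lia.
have -> : (3 * j.+2 = 3 + 3 * j.+1)%N by lia.
rewrite expnD.
set X := (j.+2 ^ (3 * j.+1))%N in h1 h2 *.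
have h3 : (j.+1 * j ^ (3 * j) <= j.+2 * X)%N by apply: leq_mul.
have h4 : (2 * (1 + j.+2) <= j.+2 ^ 3)%N.
  rewrite !expnS expn0; nia.
nia.
Qed.


Lemma main_bound (R : realFieldType) (n m : nat) : n = (m ^ 2)%N -> (0 < m)%N ->
  forall k, (2 * k <= n + 2)%N ->
  `|T R n m k| * m%:R ^+ k <= #|Sset n m|%:R * (k ^ (3 * k))%:R.
Proof.
move=> hn hm.
set N : R := #|Sset n m|%:R.
have N0 : 0 <= N by [].
have mm0 : (0 : R) < m%:R by rewrite ltr0n.
have hnR : (n%:R : R) = m%:R * m%:R by rewrite hn -natrM mulnn.
suff H : forall K k, (k <= K)%N -> (2 * k <= n + 2)%N ->
  `|T R n m k| * m%:R ^+ k <= N * (k ^ (3 * k))%:R.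
  by move=> k; apply: (H k).
elim=> [|K IH] k.
  by rewrite leqn0 => /eqP -> _; rewrite T0 expr0 mulr1 muln0 expn0 mulr1 ger0_norm.
case: k => [|[|j]] hk hb.
- by rewrite T0 expr0 mulr1 muln0 expn0 mulr1 ger0_norm.
- have hn0 : (0 < n)%N by rewrite hn expn_gt0 hm.
  have := @Trec R n m 0 hn0; rewrite T0 mul0r add0r subn0 hnR => e.
  have e2 : T R n m 1 * m%:R = N.
    apply: (mulfI (lt0r_neq0 mm0)); rewrite e; ring.
  rewrite expr1 muln1 exp1n mulr1.
  have -> : `|T R n m 1| * m%:R = `|T R n m 1 * m%:R| by rewrite normrM (ger0_norm (ltW mm0)).
  by rewrite e2 ger0_norm.
- have hj : (j.+1 < n)%N by lia.
  have := @Trec R n m j.+1 hj => /= e.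
  have IHb : `|T R n m j.+1| * m%:R ^+ j.+1 <= N * (j.+1 ^ (3 * j.+1))%:R.
    by apply: IH; lia.
  have IHa : `|T R n m j| * m%:R ^+ j <= N * (j ^ (3 * j))%:R.
    by apply: IH; lia.
  set a := T R n m j in e IHa *.
  set b := T R n m j.+1 in e IHb *.
  set c := T R n m j.+2 in e *.
  set mm : R := m%:R in e IHa IHb mm0 hnR *.
  set r : R := (n - j.+1)%:R in e.
  have hr : mm * mm <= 2 * r.
    rewrite -hnR /r -natrM ler_nat; lia.
  have r0 : 0 <= r by [].
  have h1 : r * `|c| <= mm * `|b| + j.+1%:R * `|a|.
    have -> : r * `|c| = `|mm * b - j.+1%:R * a| by rewrite e addrAC subrr add0r normrM ger0_norm.
    apply: (le_trans (ler_normB _ _)). by rewrite !normrM !normr_nat.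
  set P := mm ^+ j in IHa.
  have P0 : 0 <= P by rewrite exprn_ge0 // ltW.
  have eP1 : mm ^+ j.+1 = mm * P by rewrite exprS.
  have eP2 : mm ^+ j.+2 = mm * (mm * P) by rewrite !exprS.
  rewrite eP1 in IHb; rewrite eP2.
  set d1 : R := (j.+1 ^ (3 * j.+1))%:R in IHb.
  set d0 : R := (j ^ (3 * j))%:R in IHa.
  have hd : 2 * (d1 + j.+1%:R * d0) <= (j.+2 ^ (3 * j.+2))%:R.
    by rewrite /d1 /d0 -natrM -natrD -natrM ler_nat dineq.
  set d : R := (j.+2 ^ (3 * j.+2))%:R in hd *.
  have ha0 : 0 <= `|a| by [].
  have hb0 : 0 <= `|b| by [].
  have hc0 : 0 <= `|c| by [].
  set u := `|c| * (mm * (mm * P)).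
  have u0 : 0 <= u by apply: mulr_ge0 => //; apply: mulr_ge0; [exact: ltW | apply: mulr_ge0 => //; exact: ltW].
  have h2 : r * u <= mm * mm * (N * d1 + j.+1%:R * (N * d0)).
    have -> : r * u = (r * `|c|) * (mm * mm * P) by rewrite /u; ring.
    apply: le_trans (ler_wpM2r _ h1) _; first by rewrite mulr_ge0 // mulr_ge0 ?ltW.
    have -> : (mm * `|b| + j.+1%:R * `|a|) * (mm * mm * P) =
      mm * mm * (`|b| * (mm * P) + j.+1%:R * (`|a| * P)) by ring.
    apply: ler_wpM2l; first by rewrite mulr_ge0 ?ltW.
    by apply: lerD => //; apply: ler_wpM2l.
  have h3 : mm * mm * u <= mm * mm * (N * d).
    apply: le_trans (_ : 2 * r * u <= _); first by apply: ler_wpM2r.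
    have -> : 2 * r * u = 2 * (r * u) by ring.
    apply: le_trans (ler_wpM2l _ h2) _ => //.
    have -> : 2 * (mm * mm * (N * d1 + j.+1%:R * (N * d0))) =
       mm * mm * (N * (2 * (d1 + j.+1%:R * d0))) by ring.
    apply: ler_wpM2l; first by rewrite mulr_ge0 ?ltW.
    by apply: ler_wpM2l.
  by rewrite -(ler_pM2l (mulr_gt0 mm0 mm0)).
Qed.

Theorem corollaryB7 (R : realFieldType) (n m k : nat) :
  n = (m ^ 2)%N -> (1 <= k <= n)%N ->
  `| moment R n m k | <= (k ^ (3 * k))%:R / (m ^ k)%:R.
Proof.
move=> hn /andP[k1 kn].
have hm : (0 < m)%N.
  case: m hn => [|m'] hn //; rewrite hn /= in kn; lia.
have -> : moment R n m k = T R n m k / #|Sset n m|%:R by [].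
have M0 : (0 : R) < (m ^ k)%:R by rewrite ltr0n expn_gt0 hm.
have d0 : (0 : R) <= (k ^ (3 * k))%:R / (m ^ k)%:R by rewrite divr_ge0 // ltW.
case: (posnP #|Sset n m|) => [N0|Npos].
  by rewrite N0 invr0 mulr0 normr0.
have Ngt : (0 : R) < #|Sset n m|%:R by rewrite ltr0n.
rewrite normrM normfV (ger0_norm (ltW Ngt)).
case: (leqP (2 * k) (n + 2)) => hb.
- have := @main_bound R n m hn hm k hb.
  move=> h; rewrite ler_pdivrMr // mulrAC ler_pdivlMr // (natrX _ m k).
  by rewrite [X in _ <= X]mulrC.
- apply: (@le_trans _ _ 1).
    by rewrite ler_pdivrMr // mul1r Tle.
  rewrite ler_pdivlMr // mul1r ler_nat expnM.
  apply: lexp.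
  have hk2 : (2 <= k)%N by rewrite hn in hb; lia.
  rewrite hn in hb; move: hb; rewrite !expnS expn0 !muln1 => hb.
  nia.
Qed.
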